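(* Let $G=(V,E)$ be a graph. Then $V$ can be partitioned into three sets $V_1,V_2,V_3$ such that each $G[V_i]$ is a clique if and only if $G$ has three pairwise vertex-disjoint subgraphs $G_1,G_2,G_3$ with $\sum_{i=1}^3\mathrm{density}(G_i)\geq (|V|-3)/2$.
   Context: A subgraph means an induced subgraph $G[U]$ for a nonempty vertex set $U$. The density of a graph with vertex set $V'$ and edge set $E'$ is $|E'|/|V'|$. In the partition, each part is nonempty. *)

(* Defs.v *)
(* A (simple) graph is a symmetric irreflexive relation
   e on a finite vertex type T; the vertex set V is [set: T]. *)
From HB Require Import structures.
From mathcomp Require Import all_boot all_order all_algebra.
Set Implicit Arguments. Unset Strict Implicit. Unset Printing Implicit Defensive.
Import Order.TTheory GRing.Theory Num.Theory.

Definition edges_in (T : finType) (e : rel T) (U : {set T}) : {set {set T}} :=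
  [set A : {set T} | [exists x : T, exists y : T,
      [&& x \in U, y \in U, e x y & A == [set x; y]]]].

Definition density (T : finType) (e : rel T) (U : {set T}) : rat :=
  (#|edges_in e U|%:R / #|U|%:R)%R.

Definition is_clique (T : finType) (e : rel T) (U : {set T}) : Prop :=
  forall x y, x \in U -> y \in U -> x != y -> e x y.

(* Main.v *)
Require Import Defs.
From HB Require Import structures.
From mathcomp Require Import all_boot all_order all_algebra.
From mathcomp Require Import ring lra.
Import Order.TTheory GRing.Theory Num.Theory.
Set Implicit Arguments. Unset Strict Implicit.

Section Aux.
Variables (T : finType) (e : rel T).
Hypothesis e_sym : symmetric e.
Hypothesis e_irr : irreflexive e.

Definition twos (U : {set T}) := [set A : {set T} | A \subset U & #|A| == 2].

Lemma edges_sub (U : {set T}) : edges_in e U \subset twos U.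
Proof.
apply/subsetP => A; rewrite !inE => /existsP[x /existsP[y /and4P[xU yU exy /eqP->]]].
rewrite cards2 subUset !sub1set xU yU /=.
have -> // : x != y by apply/eqP=> xy; rewrite xy e_irr in exy.
Qed.

Lemma clique_edges (U : {set T}) : is_clique e U -> edges_in e U = twos U.
Proof.
move=> cl; apply/eqP; rewrite eqEsubset edges_sub /=.
apply/subsetP => A; rewrite !inE => /andP[AU /cards2P[x [y [xy AE]]]].
move: AU; rewrite AE subUset !sub1set => /andP[xU yU].
apply/existsP; exists x; apply/existsP; exists y.
by rewrite xU yU eqxx andbT; exact: cl.
Qed.

Lemma edges_clique (U : {set T}) : edges_in e U = twos U -> is_clique e U.
Proof.
move=> E x y xU yU xy.
have : [set x; y] \in twos U by rewrite inE cards2 xy subUset !sub1set xU yU.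
rewrite -E inE => /existsP[x' /existsP[y' /and4P[_ _ exy /eqP AE]]].
have hx : x \in [set x'; y'] by rewrite -AE !inE eqxx.
have hy : y \in [set x'; y'] by rewrite -AE !inE eqxx orbT.
move: hx hy; rewrite !inE => /orP[]/eqP hx /orP[]/eqP hy; subst x y.
- by rewrite eqxx in xy.
- by [].
- by rewrite e_sym.
- by rewrite eqxx in xy.
Qed.

Lemma m_le (U : {set T}) : #|edges_in e U| <= 'C(#|U|, 2).
Proof. by rewrite -cards_draws; apply: subset_leq_card; apply: edges_sub. Qed.

Lemma m_eq (U : {set T}) : #|edges_in e U| = 'C(#|U|, 2) -> is_clique e U.
Proof.
move=> h; apply: edges_clique; apply/eqP; rewrite eqEcard edges_sub /=.
by rewrite /twos cards_draws h.
Qed.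

Lemma clique_m (U : {set T}) : is_clique e U -> #|edges_in e U| = 'C(#|U|, 2).
Proof. by move=> /clique_edges ->; rewrite cards_draws. Qed.

Lemma half_eq (U : {set T}) : U != set0 ->
  ((#|U|%:R - 1) / 2 = ('C(#|U|, 2))%:R / (#|U|%:R : rat))%R.
Proof.
rewrite -card_gt0 => k0.
have h := mul_bin_diag #|U| 1; rewrite bin1 in h.
have k0' : ((#|U|%:R : rat) != 0)%R by rewrite pnatr_eq0 -lt0n.
have hr : ((#|U|%:R : rat) * (#|U|.-1)%:R = 2 * ('C(#|U|, 2))%:R)%R.
  by rewrite -natrM h natrM.
have hp : ((#|U|.-1)%:R : rat) = (#|U|%:R - 1)%R.
  by rewrite -{2}(prednK k0) -natr1 addrK.
rewrite hp in hr.
have hc : (('C(#|U|, 2))%:R : rat) = (#|U|%:R * (#|U|%:R - 1) / 2)%R.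
  by rewrite hr; field.
by rewrite hc; field.
Qed.

Lemma dens_le (U : {set T}) : U != set0 -> (density e U <= (#|U|%:R - 1) / 2)%R.
Proof.
move=> U0; rewrite half_eq // /density ler_wpM2r ?invr_ge0 ?ler0n //.
by rewrite ler_nat m_le.
Qed.

Lemma dens_eq (U : {set T}) : U != set0 -> density e U = ((#|U|%:R - 1) / 2)%R ->
  is_clique e U.
Proof.
move=> U0; rewrite half_eq // /density => h; apply: m_eq.
have k0' : ((#|U|%:R : rat) != 0)%R by rewrite pnatr_eq0 -lt0n card_gt0.
apply/eqP; rewrite -(eqr_nat rat); apply/eqP.
by apply: (mulIf (invr_neq0 k0')).
Qed.

Lemma clique_dens (U : {set T}) : U != set0 -> is_clique e U ->
  density e U = ((#|U|%:R - 1) / 2)%R.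
Proof. by move=> U0 /clique_m h; rewrite half_eq // /density h. Qed.

End Aux.

Lemma card3 (X : finType) (a b c : X) : a != b -> b != c -> c != a ->
  #|[set a; b; c]| = 3.
Proof.
move=> ab bc ca; rewrite -setUA cardsU1 cards2 !inE negb_or ab bc /=.
by rewrite eq_sym ca.
Qed.

Lemma sum3 (X : finType) (a b c : X) (F : X -> nat) : a != b -> b != c -> c != a ->
  \sum_(x in [set a; b; c]) F x = F a + F b + F c.
Proof.
move=> ab bc ca; rewrite -setUA big_setU1 /=; last by rewrite !inE negb_or ab eq_sym ca.
by rewrite big_setU1 /= ?big_set1 ?addnA // inE.
Qed.

Theorem lemma5 (T : finType) (e : rel T) (e_sym : symmetric e) (e_irr : irreflexive e) :
  (exists P : {set {set T}},
      [/\ partition P [set: T], #|P| = 3 & forall A, A \in P -> is_clique e A])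
  <->
  (exists U1 U2 U3 : {set T},
      [/\ U1 != set0, U2 != set0, U3 != set0,
          [/\ [disjoint U1 & U2], [disjoint U1 & U3] & [disjoint U2 & U3]] &
          ((#|T|%:R - 3%:R) / 2%:R <= density e U1 + density e U2 + density e U3)%R]).
Proof.
split.
- move=> [P [partP cardP clP]].
  have : 2 < #|P| by rewrite cardP.
  case/card_gt2P => [a [b [c [[aP bP cP] [ab bc ca]]]]].
  have PE : P = [set a; b; c].
    apply/eqP; rewrite eq_sym eqEcard cardP card3 // andbT.
    by rewrite !subUset !sub1set aP bP cP.
  move: partP => /and3P[/eqP covP trivP set0P].
  have ne : forall A, A \in P -> A != set0.
    by move=> A AP; apply: contraNneq set0P => <-.
  have dj : forall A B, A \in P -> B \in P -> A != B -> [disjoint A & B].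
    by move=> A B AP BP; apply: (trivIsetP trivP).
  have hT : #|T| = #|a| + #|b| + #|c|.
    by rewrite -cardsT -covP -(eqP trivP) PE sum3.
  have ac : a != c by rewrite eq_sym.
  exists a, b, c; split; rewrite ?ne ?dj //.
  rewrite (clique_dens e_irr (ne _ aP) (clP _ aP)) (clique_dens e_irr (ne _ bP) (clP _ bP)).
  rewrite (clique_dens e_irr (ne _ cP) (clP _ cP)) hT !natrD; lra.
- move=> [U1 [U2 [U3 [n1 n2 n3 [d12 d13 d23] H]]]].
  have l1 := dens_le e_irr n1; have l2 := dens_le e_irr n2; have l3 := dens_le e_irr n3.
  have hs : #|U1| + #|U2| + #|U3| <= #|T|.
    rewrite -cardsT; apply: leq_trans (subset_leq_card (subsetT (U1 :|: U2 :|: U3))).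
    rewrite cardsU cardsU (disjoint_setI0 d12) cards0 subn0 setIUl.
    by rewrite (disjoint_setI0 d13) (disjoint_setI0 d23) setU0 cards0 subn0.
  have hs' : ((#|U1|%:R + #|U2|%:R + #|U3|%:R : rat) <= #|T|%:R)%R.
    by rewrite -!natrD ler_nat.
  have e1 : density e U1 = ((#|U1|%:R - 1) / 2)%R by lra.
  have e2 : density e U2 = ((#|U2|%:R - 1) / 2)%R by lra.
  have e3 : density e U3 = ((#|U3|%:R - 1) / 2)%R by lra.
  have eT : ((#|U1|%:R + #|U2|%:R + #|U3|%:R : rat) = #|T|%:R)%R by lra.
  move: eT; rewrite -!natrD => /eqP; rewrite eqr_nat => /eqP eT.
  have neq : forall A B : {set T}, A != set0 -> [disjoint A & B] -> A != B.
    move=> A B A0 dAB; apply: contra_neq A0 => AB.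
    by move: (disjoint_setI0 dAB); rewrite -AB setIid.
  have a12 := neq _ _ n1 d12; have a23 := neq _ _ n2 d23.
  have a31 : U3 != U1 by rewrite eq_sym; apply: neq _ _ n1 d13.
  exists [set U1; U2; U3]; split; last first.
  + move=> A; rewrite !inE => /orP[/orP[]|]/eqP->; apply: dens_eq => //.
  + by rewrite card3.
  have triv : trivIset [set U1; U2; U3].
    apply/trivIsetP => A B; rewrite !inE => /orP[/orP[]|]/eqP-> /orP[/orP[]|]/eqP->;
      rewrite ?eqxx // => _; by rewrite // disjoint_sym.
  apply/and3P; split => //.
  * rewrite eqEcard subsetT /= -(eqP triv) sum3 // eT cardsT.
    by [].
  * rewrite !inE !negb_or !(eq_sym set0) n1 n2 n3.
    by [].
Qed.
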